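(* Given a network $f$ and an input $\mathbf{x} = \langle x_1, \ldots, x_m \rangle$ where $m \geq 2$, the time complexity of $\textsc{binarySequential}(f, \mathbf{x})$ is $2$ calls of $\textsc{checkValid}$ for the best case (all features are irrelevant) and $k_{2m} = 2 \cdot k_m + 1$ or $k_{2m+1} = k_{m+1} + k_m + 1$ calls of $\textsc{checkValid}$ for the worst case (all features are in explanation). When $m = 1$, it needs $1$ $\textsc{checkValid}$ call.
   Context: $f$ is a neural network (classifier or regressor), $\mathbf{x}$ an input with $m$ features, $\epsilon$ a perturbation magnitude and $p$ a norm. The oracle $\textsc{checkValid}(f, \mathbf{x}, \mathbf{x}_S)$ returns True iff every input obtained from $\mathbf{x}$ by perturbing the features in $\mathbf{x}_S$ within $\epsilon$ (in $p$-norm) while keeping all other features fixed yields the same prediction as $\mathbf{x}$ (same class, or output within $\delta$ for regression); features whose perturbation preserves the prediction are called irrelevant, the others form the explanation. The procedure $\textsc{binarySequential}$ maintains global sets $\mathbf{x}_\mathbf{A}$ (explanation) and $\mathbf{x}_\mathbf{B}$ (irrelevant), both initialized to $\emptyset$, and on candidate features $\mathbf{x}_\Theta$ does: if $|\mathbf{x}_\Theta|=1$, call $\textsc{checkValid}(f,\mathbf{x},\mathbf{x}_\mathbf{B}\cup\mathbf{x}_\Theta)$ and add $\mathbf{x}_\Theta$ to $\mathbf{x}_\mathbf{B}$ if True, else to $\mathbf{x}_\mathbf{A}$. Otherwise split $\mathbf{x}_\Theta$ into two consecutive halves $\mathbf{x}_\Phi,\mathbf{x}_\Psi$ (with $|\mathbf{x}_\Phi|=|\mathbf{x}_\Psi|+1$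 when $|\mathbf{x}_\Theta|$ is odd). If $\textsc{checkValid}(f,\mathbf{x},\mathbf{x}_\mathbf{B}\cup\mathbf{x}_\Phi)$ is True: add $\mathbf{x}_\Phi$ to $\mathbf{x}_\mathbf{B}$; then if $\textsc{checkValid}(f,\mathbf{x},\mathbf{x}_\mathbf{B}\cup\mathbf{x}_\Psi)$ is True add $\mathbf{x}_\Psi$ to $\mathbf{x}_\mathbf{B}$, else if $|\mathbf{x}_\Psi|=1$ add it to $\mathbf{x}_\mathbf{A}$, else recurse on $\mathbf{x}_\Psi$. If instead the check on $\mathbf{x}_\Phi$ is False: if $|\mathbf{x}_\Phi|=1$ add it to $\mathbf{x}_\mathbf{A}$, else recurse on $\mathbf{x}_\Phi$; then recurse on $\mathbf{x}_\Psi$. Here $k_m$ denotes the number of $\textsc{checkValid}$ calls in the worst case for an input of $m$ features. *)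

(* Defs.v *)
From mathcomp Require Import all_boot.
Set Implicit Arguments. Unset Strict Implicit. Unset Printing Implicit Defensive.

(* Features of x = <x_1,...,x_m> are represented by their indices 0..m-1
   (the sequence [iota 0 m], in order).  A call checkValid(f, x, x_S) is
   modelled by an abstract boolean oracle [chk : seq nat -> bool] applied
   to the sequence of indices of the perturbed features x_S (f, x, eps, p
   are fixed, so the oracle only depends on the perturbed feature set). *)
Definition oracle := seq nat -> bool.

(* State of binarySequential: (explanation x_A, irrelevant x_B, number of
   checkValid calls made so far). *)
Definition state := (seq nat * seq nat * nat)%type.

(* binarySequential on candidate features T, with fuel (the fuel is the
   recursion bound; starting it at size T is always sufficient). *)
Fixpoint bseq (fuel : nat) (chk : oracle) (st : state) (T : seq nat) : state :=
  match fuel with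
  | 0 => st
  | fuel'.+1 =>
    let: (A, B, c) := st in
    if size T == 1 then
      (if chk (B ++ T) then (A, B ++ T, c.+1) else (A ++ T, B, c.+1))
    else if size T == 0 then st
    else
      let h := uphalf (size T) in        (* |Phi| = |Psi| + 1 when odd *)
      let Phi := take h T in
      let Psi := drop h T in
      if chk (B ++ Phi) then
        let B1 := B ++ Phi in
        if chk (B1 ++ Psi) then (A, B1 ++ Psi, c.+2)
        else if size Psi == 1 then (A ++ Psi, B1, c.+2)
        else bseq fuel' chk (A, B1, c.+2) Psi
      else
        let st1 := if size Phi == 1 then (A ++ Phi, B, c.+1)
                   else bseq fuel' chk (A, B, c.+1) Phi in
        bseq fuel' chk st1 Psi
  end.

Definition binarySequential (chk : oracle) (m : nat) : state :=
  bseq m chk ([::], [::], 0) (iota 0 m).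

Definition ncalls (chk : oracle) (m : nat) : nat := (binarySequential chk m).2.

Definition all_irrelevant (chk : oracle) : Prop := forall S, chk S = true.

(* Worst case: all features in the explanation -- perturbing any nonempty
   set of features can change the prediction, so every query on a nonempty
   feature set fails. *)
Definition all_explanation (chk : oracle) : Prop :=
  forall S, S != [::] -> chk S = false.

(* k_m: number of calls in the worst case, computed with the canonical
   all-explanation oracle (only the empty perturbation is valid). *)
Definition k (m : nat) : nat := ncalls (fun S => S == [::]) m.

(* Main.v *)
Require Import Defs.
From mathcomp Require Import all_boot.
From mathcomp Require Import zify.

Fixpoint w fuel n := match fuel with 0 => 0 | f.+1 =>
  if n == 1 then 1 else if n == 0 then 0 else
  1 + (if uphalf n == 1 then 0 else w f (uphalf n)) + w f (n./2) end.

Lemma half_facts n : 2 <= n -> [/\ 1 <= uphalf n, uphalf n < n, 1 <= n./2, n./2 < n & n - uphalf n = n./2].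
Proof.
move=> H; have := odd_double_half n; rewrite uphalf_half -addnn.
case: (odd n) => /= E; split; lia.
Qed.

Lemma L fuel chk (A : seq nat) (c : nat) (T : seq nat) : all_explanation chk -> size T <= fuel ->
  Defs.bseq fuel chk (A,[::],c) T = (A ++ T, [::], c + w fuel (size T)).
Proof.
move=> He; elim: fuel A c T => [|f IH] A c T.
  by rewrite leqn0 => /nilP ->; rewrite cats0 addn0.
move=> Hs /=.
case: eqP => [H1|H1].
  rewrite He; last by case: T H1 {Hs}.
  by rewrite addn1.
case: eqP => [/size0nil -> | H0]; first by rewrite cats0 addn0.
have H2 : 2 <= size T by case: (size T) H1 H0 => [|[|]].
have [u1 u2 h1 h2 hd] := half_facts _ H2.
have szP : size (take (uphalf (size T)) T) = uphalf (size T) by rewrite size_takel; lia.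
rewrite He; last by rewrite -size_eq0 szP; lia.
have szQ : size (drop (uphalf (size T)) T) = (size T)./2 by rewrite size_drop.
rewrite szP.
case: eqP => [u|u].
  rewrite IH szQ; last lia.
  by rewrite -catA cat_take_drop; congr (_,_,_); lia.
rewrite IH ?szP; last lia.
rewrite IH szQ; last lia.
by rewrite -catA cat_take_drop; congr (_,_,_); lia.
Qed.

Lemma wS f n : w f.+1 n = if n == 1 then 1 else if n == 0 then 0 else
  1 + (if uphalf n == 1 then 0 else w f (uphalf n)) + w f (n./2).
Proof. by []. Qed.

Lemma wrec f n : 2 <= n -> w f.+1 n = 1 + (if uphalf n == 1 then 0 else w f (uphalf n)) + w f (n./2).
Proof. by case: n => [|[|n]]. Qed.

Lemma W f1 f2 n : n <= f1 -> n <= f2 -> w f1 n = w f2 n.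
Proof.
elim: f1 f2 n => [|f1 IH] f2 n h1 h2.
  by move: h1; rewrite leqn0 => /eqP ->; case: f2 {h2}.
case: f2 h2 => [|f2] h2.
  by move: h2; rewrite leqn0 => /eqP ->.
rewrite !wS.
case: n h1 h2 => [|[|n]] // h1 h2.
have [u1 u2 a1 a2 hd] := half_facts n.+2 isT.
rewrite (IH f2 (n.+2)./2); [|lia|lia].
case: (uphalf n.+2 == 1) => //.
rewrite (IH f2 (uphalf n.+2)) //; lia.
Qed.

Lemma canon : all_explanation (fun S => S == [::]).
Proof. by move=> S /negbTE. Qed.

Lemma kE m : k m = w m m.
Proof. by rewrite /k /ncalls /binarySequential L ?size_iota //; apply: canon. Qed.

Theorem theorem1 :
  (forall chk : oracle, ncalls chk 1 = 1) /\
  (forall (m : nat) (chk : oracle), 2 <= m -> all_irrelevant chk ->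
     ncalls chk m = 2) /\
  (forall (m : nat) (chk : oracle), all_explanation chk -> ncalls chk m = k m) /\
  (forall m : nat, 2 <= m ->
     k (2 * m) = 2 * k m + 1 /\ k (2 * m + 1) = k (m + 1) + k m + 1).
Proof.
split.
  by move=> chk; rewrite /ncalls /binarySequential /=; case: (chk _).
split.
  move=> [|[|m]] chk // _ Hi; rewrite /ncalls /binarySequential /=.
  by rewrite !Hi.
split.
  by move=> m chk He; rewrite kE /ncalls /binarySequential L ?size_iota.
move=> m Hm; rewrite !kE.
have e1 : 2 * m = m.*2 by rewrite mul2n.
have e2 : 2 * m + 1 = m.*2.+1 by rewrite mul2n addn1.
rewrite e2 e1.
have u1 : uphalf m.*2 = m by rewrite uphalf_double.
have h1 : (m.*2)./2 = m by rewrite doubleK.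
have u2 : uphalf m.*2.+1 = m.+1 by rewrite uphalfE -doubleS doubleK.
have h2 : (m.*2.+1)./2 = m by apply: (half_bit_double m true).
split.
  rewrite (@W m.*2 (m.*2).-1.+1 m.*2); [|lia|lia].
  rewrite wrec; last lia.
  rewrite u1 h1 (_ : (m == 1) = false); last by apply/eqP; lia.
  rewrite (@W _ m m); [|lia|lia]. lia.
rewrite wrec; last lia.
rewrite u2 h2 (_ : (m.+1 == 1) = false); last by apply/eqP; lia.
rewrite (@W _ m m); [|lia|lia].
rewrite (@W _ (m+1) m.+1); [|lia|lia].
rewrite addn1; lia.
Qed.
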